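(* Let $G$ be a finite simple bipartite cactus graph. Then $S(G)$ is planar (i.e. has a planar drawing).
   Context: For a graph $G$, the great shadow $S(G)$ is the graph obtained from $G$ by adding, for each vertex $v$ of $G$, a new vertex $v'$ (the shadow vertex of $v$) and making $v'$ adjacent to $v$ and to every neighbor of $v$ in $G$; no other edges are added. A cactus graph is a connected graph in which no two cycles share an edge. A bipartite cactus is a cactus graph that is bipartite (all cycles have even length). *)

(* Defs.v *)
From mathcomp Require Import all_boot.
From Stdlib Require Import Reals.

Set Implicit Arguments.
Unset Strict Implicit.
Unset Printing Implicit Defensive.

Definition simple_graph (V : finType) (e : rel V) : Prop :=
  symmetric e /\ irreflexive e.

Definition connected_graph (V : finType) (e : rel V) : Prop :=
  forall x y : V, connect e x y.

Definition bipartite (V : finType) (e : rel V) : Prop :=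
  exists col : V -> bool, forall x y, e x y -> col x != col y.

Definition is_graph_cycle (V : finType) (e : rel V) (c : seq V) : bool :=
  [&& uniq c, 2 < size c & cycle e c].

Definition cycle_edges (V : finType) (c : seq V) : {set {set V}} :=
  [set [set x; next c x] | x in c].

Definition cactus (V : finType) (e : rel V) : Prop :=
  connected_graph e /\
  forall c1 c2 : seq V, is_graph_cycle e c1 -> is_graph_cycle e c2 ->
    cycle_edges c1 != cycle_edges c2 ->
    [disjoint cycle_edges c1 & cycle_edges c2].

(* Great shadow S(G): vertices inl v (original) and inr v (shadow v').
   v' is adjacent to v and to all neighbours of v; no other new edges. *)
Definition great_shadow (V : finType) (e : rel V) : rel (V + V) :=
  fun a b =>
    match a, b with
    | inl u, inl v => e u v
    | inl u, inr v => (u == v) || e v u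
    | inr u, inl v => (u == v) || e u v
    | inr _, inr _ => false
    end.

Local Open Scope R_scope.

Definition in01 (t : R) : Prop := 0 <= t <= 1.
Definition in01o (t : R) : Prop := 0 < t < 1.

Definition cont01 (f : R -> R * R) : Prop :=
  forall t, in01 t -> forall eps, 0 < eps -> exists delta, 0 < delta /\
    forall s, in01 s -> Rabs (s - t) < delta ->
      Rabs (fst (f s) - fst (f t)) < eps /\ Rabs (snd (f s) - snd (f t)) < eps.

Definition arc01 (f : R -> R * R) : Prop :=
  cont01 f /\ forall s t, in01 s -> in01 t -> f s = f t -> s = t.

Definition planar_drawing (V : finType) (r : rel V)
    (pos : V -> R * R) (arc : V -> V -> R -> R * R) : Prop :=
  injective pos /\
  (forall u v, r u v ->
     arc01 (arc u v) /\ arc u v 0 = pos u /\ arc u v 1 = pos v /\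
     forall t w, in01o t -> arc u v t <> pos w) /\
  (forall u v u' v', r u v -> r u' v' -> [set u; v] != [set u'; v'] ->
     forall s t, in01o s -> in01o t -> arc u v s <> arc u' v' t).

Definition planar (V : finType) (r : rel V) : Prop :=
  exists pos arc, @planar_drawing V r pos arc.

(* Main.v *)
From Stdlib Require Import Reals Lra.
From mathcomp Require Import all_boot.
Require Import Defs.
Set Implicit Arguments. Unset Strict Implicit. Unset Printing Implicit Defensive.

(* Proof strategy: straight-line drawings; recursive block decomposition of the
   bipartite cactus; gluing of normal-form drawings by affine maps. *)

Local Open Scope R_scope.


Definition pt := (R * R)%type.
Definition seg (P Q : pt) (t : R) : pt :=
  (fst P + t * (fst Q - fst P), snd P + t * (snd Q - snd P)).

Lemma seg_sym P Q t : seg P Q t = seg Q P (1 - t).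
Proof. unfold seg; f_equal; ring. Qed.

Lemma seg0 P Q : seg P Q 0 = P.
Proof. unfold seg; destruct P; simpl; f_equal; ring. Qed.
Lemma seg1 P Q : seg P Q 1 = Q.
Proof. unfold seg; destruct Q; simpl; f_equal; ring. Qed.

Definition aff (a b c d e f : R) (z : pt) : pt :=
  (a * fst z + b * snd z + e, c * fst z + d * snd z + f).

Lemma aff_seg a b c d e f P Q t :
  aff a b c d e f (seg P Q t) = seg (aff a b c d e f P) (aff a b c d e f Q) t.
Proof. unfold aff, seg; simpl; f_equal; ring. Qed.

Lemma aff_inj a b c d e f z1 z2 : a * d - b * c <> 0 ->
  aff a b c d e f z1 = aff a b c d e f z2 -> z1 = z2.
Proof.
destruct z1 as [x1 y1], z2 as [x2 y2]; unfold aff; simpl; intros Hd H.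
injection H; intros H2 H1.
assert (E1 : a * (x1 - x2) + b * (y1 - y2) = 0) by lra.
assert (E2 : c * (x1 - x2) + d * (y1 - y2) = 0) by lra.
assert (Ex : (a * d - b * c) * (x1 - x2) = 0).
{ replace ((a * d - b * c) * (x1 - x2)) with
    (d * (a * (x1 - x2) + b * (y1 - y2)) - b * (c * (x1 - x2) + d * (y1 - y2))) by ring.
  rewrite E1 E2; ring. }
assert (Ey : (a * d - b * c) * (y1 - y2) = 0).
{ replace ((a * d - b * c) * (y1 - y2)) with
    (a * (c * (x1 - x2) + d * (y1 - y2)) - c * (a * (x1 - x2) + b * (y1 - y2))) by ring.
  rewrite E1 E2; ring. }
apply Rmult_integral in Ex; apply Rmult_integral in Ey.
destruct Ex as [Ex|Ex]; [contradiction|]; destruct Ey as [Ey|Ey]; [contradiction|].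
f_equal; lra.
Qed.

Lemma seg_inj P Q s t : P <> Q -> seg P Q s = seg P Q t -> s = t.
Proof.
destruct P as [x1 y1], Q as [x2 y2]; unfold seg; simpl; intros HPQ H.
injection H; intros H2 H1.
destruct (Req_dec x1 x2) as [ex|ex].
- destruct (Req_dec y1 y2) as [ey|ey].
  + subst; contradiction.
  + assert (E : (s - t) * (y2 - y1) = 0) by lra.
    apply Rmult_integral in E; destruct E as [E|E]; lra.
- assert (E : (s - t) * (x2 - x1) = 0) by lra.
  apply Rmult_integral in E; destruct E as [E|E]; lra.
Qed.

Lemma seg_cont P Q : cont01 (seg P Q).
Proof.
intros t _ eps Heps.
set (k := Rabs (fst Q - fst P) + Rabs (snd Q - snd P) + 1).
assert (Hk : 0 < k) by (unfold k; pose proof (Rabs_pos (fst Q - fst P));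
  pose proof (Rabs_pos (snd Q - snd P)); lra).
exists (eps / k); split.
- apply Rdiv_lt_0_compat; lra.
- intros s _ Hs; unfold seg; simpl.
  assert (HA : forall a, Rabs a <= k ->
     Rabs (fst P + s * a - (fst P + t * a)) < eps).
  { intros a Ha.
    replace (fst P + s * a - (fst P + t * a)) with ((s - t) * a) by ring.
    rewrite Rabs_mult.
    destruct (Req_dec a 0) as [a0|a0].
    - subst; rewrite Rabs_R0 Rmult_0_r; lra.
    - assert (Rabs a > 0) by (apply Rabs_pos_lt; auto).
      apply Rle_lt_trans with (Rabs (s - t) * k).
      + apply Rmult_le_compat_l; [apply Rabs_pos|exact Ha].
      + apply Rlt_le_trans with (eps / k * k).
        * apply Rmult_lt_compat_r; lra.
        * right; field; lra. }
  split.
  + apply HA; unfold k; pose proof (Rabs_pos (snd Q - snd P)); lra.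
  + replace (snd P + s * (snd Q - snd P) - (snd P + t * (snd Q - snd P)))
      with (fst P + s * (snd Q - snd P) - (fst P + t * (snd Q - snd P))) by ring.
    apply HA; unfold k; pose proof (Rabs_pos (fst Q - fst P)); lra.
Qed.


Definition sv (V : Type) (w : V + V) : V := match w with inl v => v | inr v => v end.

Section Draw.
Variable V : finType.
Variable e : rel V.
Hypothesis esym : symmetric e.
Hypothesis eirr : irreflexive e.

Local Notation W := (V + V)%type.
Local Notation sE := (great_shadow e).

Definition good (X : {set V}) (p : W -> pt) : Prop :=
  (forall u w, sv u \in X -> sv w \in X -> p u = p w -> u = w) /\
  (forall u w z t, sv u \in X -> sv w \in X -> sv z \in X -> sE u w -> 0 < t < 1 ->
      seg (p u) (p w) t <> p z) /\
  (forall u w u' w' s t, sv u \in X -> sv w \in X -> sv u' \in X -> sv w' \in X ->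
      sE u w -> sE u' w' -> [set u; w] != [set u'; w'] -> 0 < s < 1 -> 0 < t < 1 ->
      seg (p u) (p w) s <> seg (p u') (p w') t).

Definition pts (X : {set V}) (p : W -> pt) (A : pt -> Prop) : Prop :=
  (forall w, sv w \in X -> A (p w)) /\
  (forall u w t, sv u \in X -> sv w \in X -> sE u w -> 0 < t < 1 -> A (seg (p u) (p w) t)).

Lemma sE_sym (u w : W) : sE u w = sE w u.
Proof.
case: u => u; case: w => w //=.
all: try by rewrite eq_sym.
all: exact: esym.
Qed.

Lemma sE_irr (w : W) : sE w w = false.
Proof. by case: w => w //=; apply: eirr. Qed.

Lemma sE_neq (u w : W) : sE u w -> u <> w.
Proof. by move=> H E; subst; rewrite sE_irr in H. Qed.

Lemma good_planar (p : W -> pt) : good setT p -> planar_drawing sE p (fun u v => seg (p u) (p v)).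
Proof.
move=> [H1 [H2 H3]]; split; [|split].
- by move=> u w; apply: H1; rewrite in_setT.
- move=> u v Huv; split; [split|split; [|split]].
  + exact: seg_cont.
  + move=> s t _ _; apply: seg_inj => E.
    by apply: (sE_neq Huv); apply: H1; rewrite ?in_setT.
  + exact: seg0.
  + exact: seg1.
  + by move=> t w Ht; apply: H2; rewrite ?in_setT.
- move=> u v u' v' H H' Hn s t Hs Ht; apply: H3; rewrite ?in_setT //.
Qed.

Lemma good_ext (X : {set V}) (p q : W -> pt) : (forall w, sv w \in X -> p w = q w) -> good X p -> good X q.
Proof.
move=> E [H1 [H2 H3]]; split; [|split].
- move=> u w Hu Hw; rewrite -!E //; exact: H1.
- move=> u w z t Hu Hw Hz; rewrite -!E //; exact: H2.
- move=> u w u' w' s t Hu Hw Hu' Hw'; rewrite -!E //; exact: H3.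
Qed.

Lemma pts_ext (X : {set V}) (p q : W -> pt) A : (forall w, sv w \in X -> p w = q w) -> pts X p A -> pts X q A.
Proof.
move=> E [H1 H2]; split.
- move=> w Hw; rewrite -E //; exact: H1.
- move=> u w t Hu Hw; rewrite -!E //; exact: H2.
Qed.

Lemma pts_mono (X : {set V}) (p : W -> pt) (A B : pt -> Prop) : (forall z, A z -> B z) -> pts X p A -> pts X p B.
Proof. move=> AB [H1 H2]; split; [move=> *; apply: AB; auto|move=> *; apply: AB; auto]. Qed.

Lemma good_sub (X Y : {set V}) (p : W -> pt) : Y \subset X -> good X p -> good Y p.
Proof.
move=> /subsetP S [H1 [H2 H3]]; split; [|split].
- move=> u w Hu Hw; apply: H1; auto.
- move=> u w z t Hu Hw Hz; apply: H2; auto.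
- move=> u w u' w' s t Hu Hw Hu' Hw'; apply: H3; auto.
Qed.

Lemma pts_sub (X Y : {set V}) (p : W -> pt) A : Y \subset X -> pts X p A -> pts Y p A.
Proof.
move=> /subsetP S [H1 H2]; split.
- move=> w Hw; apply: H1; auto.
- move=> u w t Hu Hw; apply: H2; auto.
Qed.

Section Aff.
Variables (a b c d f g : R).
Hypothesis det : a * d - b * c <> 0.
Lemma good_aff (X : {set V}) (p : W -> pt) : good X p -> good X (fun w => aff a b c d f g (p w)).
Proof.
move=> [H1 [H2 H3]]; split; [|split].
- move=> u w Hu Hw E; apply: H1 => //; exact: aff_inj E.
- move=> u w z t Hu Hw Hz HE Ht; rewrite -aff_seg => E.
  by apply: (H2 u w z t) => //; apply: aff_inj E.
- move=> u w u' w' s t Hu Hw Hu' Hw' HE HE' Hn Hs Ht; rewrite -!aff_seg => E.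
  by apply: (H3 u w u' w' s t) => //; apply: aff_inj E.
Qed.
Lemma pts_aff (X : {set V}) (p : W -> pt) (A B : pt -> Prop) : (forall z, A z -> B (aff a b c d f g z)) ->
  pts X p A -> pts X (fun w => aff a b c d f g (p w)) B.
Proof.
move=> AB [H1 H2]; split.
- move=> w Hw; apply: AB; auto.
- move=> u w t Hu Hw HE Ht; rewrite -aff_seg; apply: AB; auto.
Qed.
End Aff.

End Draw.


Section Comb.
Variable V : finType.
Variable e : rel V.
Hypothesis esym : symmetric e.
Hypothesis eirr : irreflexive e.

Local Notation W := (V + V)%type.
Local Notation sE := (great_shadow e).
Local Notation good := (good e).
Local Notation pts := (pts e).

Lemma set2C (u w : W) : [set u; w] = [set w; u].
Proof. by apply/setP => x; rewrite !inE orbC. Qed.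

Lemma combine (X1 X2 : {set V}) (p : W -> pt) (A B C : pt -> Prop) :
  good X1 p -> good X2 p -> pts X1 p A -> pts X2 p B ->
  (forall z, A z -> B z -> False) ->
  (forall z, C z -> A z -> False) -> (forall z, C z -> B z -> False) ->
  (forall u w t, sv u \in X1 -> sv w \in X2 -> sE u w -> 0 < t < 1 -> C (seg (p u) (p w) t)) ->
  (forall u w u' w' s t, sv u \in X1 -> sv w \in X2 -> sv u' \in X1 -> sv w' \in X2 ->
     sE u w -> sE u' w' -> (u, w) <> (u', w') -> 0 < s < 1 -> 0 < t < 1 ->
     seg (p u) (p w) s <> seg (p u') (p w') t) ->
  good (X1 :|: X2) p /\ pts (X1 :|: X2) p (fun z => A z \/ B z \/ C z).
Proof.
move=> [G1a [G1b G1c]] [G2a [G2b G2c]] [P1v P1e] [P2v P2e] AB CA CB HC HCC.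
have norm : forall u w t, sv u \in X2 -> sv w \in X1 -> sE u w -> 0 < t < 1 ->
   sv w \in X1 /\ sv u \in X2 /\ sE w u /\ 0 < 1 - t < 1 /\
   seg (p u) (p w) t = seg (p w) (p u) (1 - t) /\ [set u; w] = [set w; u].
{ move=> u w t Hu Hw HE Ht; split; [done|split; [done|split]].
  - by rewrite sE_sym.
  - split; [lra|split; [exact: seg_sym|exact: set2C]]. }
have cls : forall u w t, sv u \in X1 :|: X2 -> sv w \in X1 :|: X2 -> sE u w -> 0 < t < 1 ->
   (sv u \in X1 /\ sv w \in X1) \/ (sv u \in X2 /\ sv w \in X2) \/
   (exists u0 w0 t0, sv u0 \in X1 /\ sv w0 \in X2 /\ sE u0 w0 /\ 0 < t0 < 1 /\
      seg (p u) (p w) t = seg (p u0) (p w0) t0 /\ [set u; w] = [set u0; w0]).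
{ move=> u w t; rewrite !inE => /orP [Hu|Hu] /orP [Hw|Hw] HE Ht.
  - by left.
  - right; right; exists u, w, t; done.
  - have [? [? [? [? [? ?]]]]] := norm u w t Hu Hw HE Ht.
    right; right; exists w, u, (1 - t); done.
  - by right; left. }
have regE : forall u w t, sv u \in X1 :|: X2 -> sv w \in X1 :|: X2 -> sE u w -> 0 < t < 1 ->
   let z := seg (p u) (p w) t in
   (sv u \in X1 /\ sv w \in X1 /\ A z) \/ (sv u \in X2 /\ sv w \in X2 /\ B z) \/ C z.
{ move=> u w t Hu Hw HE Ht /=.
  case: (cls u w t Hu Hw HE Ht) => [[a1 a2]|[[a1 a2]|[u0 [w0 [t0 [h1 [h2 [h3 [h4 [h5 h6]]]]]]]]]].
  - left; do 2 split => //; exact: P1e.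
  - right; left; do 2 split => //; exact: P2e.
  - right; right; rewrite h5; exact: HC. }
have regV : forall w, sv w \in X1 :|: X2 -> (sv w \in X1 /\ A (p w)) \/ (sv w \in X2 /\ B (p w)).
{ move=> w; rewrite inE => /orP [H|H]; [left|right]; split => //; auto. }
split; [split; [|split]|split].
- move=> u w Hu Hw E.
  case: (regV u Hu) => [[a1 a2]|[a1 a2]]; case: (regV w Hw) => [[b1 b2]|[b1 b2]].
  + exact: G1a.
  + by exfalso; apply: (AB (p u)) => //; rewrite E.
  + by exfalso; apply: (AB (p w)) => //; rewrite -E.
  + exact: G2a.
- move=> u w z t Hu Hw Hz HE Ht Ez.
  case: (regE u w t Hu Hw HE Ht) => /= [[a1 [a2 a3]]|[[a1 [a2 a3]]|a3]];
  case: (regV z Hz) => [[b1 b2]|[b1 b2]]; rewrite Ez in a3.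
  + exact: (G1b u w z t).
  + exact: (AB (p z)).
  + exact: (AB (p z)).
  + exact: (G2b u w z t).
  + exact: (CA (p z)).
  + exact: (CB (p z)).
- move=> u w u' w' s t Hu Hw Hu' Hw' HE HE' Hn Hs Ht Ez.
  case: (cls u w s Hu Hw HE Hs) => [[a1 a2]|[[a1 a2]|[u0 [w0 [s0 [h1 [h2 [h3 [h4 [h5 h6]]]]]]]]]];
  case: (cls u' w' t Hu' Hw' HE' Ht) => [[b1 b2]|[[b1 b2]|[u1 [w1 [t1 [k1 [k2 [k3 [k4 [k5 k6]]]]]]]]]].
  + exact: (G1c u w u' w' s t).
  + apply: (AB (seg (p u) (p w) s)); [exact: P1e|rewrite Ez; exact: P2e].
  + apply: (CA (seg (p u) (p w) s)); [rewrite Ez k5; exact: HC|exact: P1e].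
  + apply: (AB (seg (p u') (p w') t)); [exact: P1e|rewrite -Ez; exact: P2e].
  + exact: (G2c u w u' w' s t).
  + apply: (CB (seg (p u) (p w) s)); [rewrite Ez k5; exact: HC|exact: P2e].
  + apply: (CA (seg (p u') (p w') t)); [rewrite -Ez h5; exact: HC|exact: P1e].
  + apply: (CB (seg (p u') (p w') t)); [rewrite -Ez h5; exact: HC|exact: P2e].
  + apply: (HCC u0 w0 u1 w1 s0 t1) => //.
    * by move=> [E1 E2]; subst; move/eqP: Hn; apply; rewrite h6 k6.
    * by rewrite -h5 -k5.
- move=> w Hw; case: (regV w Hw) => [[_ h]|[_ h]]; [left|right; left] => //.
- move=> u w t Hu Hw HE Ht.
  case: (regE u w t Hu Hw HE Ht) => /= [[_ [_ h]]|[[_ [_ h]]|h]]; [left|right;left|right;right] => //.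
Qed.

End Comb.


Definition Dlt (z : pt) : Prop := 0 < snd z /\ snd z < 2 * fst z /\ snd z < 2 - 2 * fst z.
Definition Base (z : pt) : Prop := snd z = 0 /\ 0 <= fst z <= 1.
Definition Om (h : R) (z : pt) : Prop :=
  Dlt z /\ (snd z > 2 * h * fst z \/ snd z > 2 * h * (1 - fst z)).
Definition Tin (h : R) (z : pt) : Prop :=
  0 < snd z /\ snd z < 2 * h * fst z /\ snd z < 2 * h * (1 - fst z).

Lemma Om_Dlt h z : Om h z -> Dlt z. Proof. by case. Qed.
Lemma Om_Tin h z : Om h z -> Tin h z -> False.
Proof. destruct z as [x y]; unfold Om, Tin, Dlt; simpl; lra. Qed.
Lemma Base_Tin h z : Base z -> Tin h z -> False.
Proof. destruct z as [x y]; unfold Base, Tin; simpl; lra. Qed.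
Lemma Base_Dlt z : Base z -> Dlt z -> False.
Proof. destruct z as [x y]; unfold Base, Dlt; simpl; lra. Qed.
Lemma Om_mono h1 h2 z : 0 < h1 < 1 -> 0 < h2 < 1 -> Om h1 z -> Om (h1 * h2) z.
Proof.
destruct z as [x y]; unfold Om, Dlt; simpl; intros H1 H2 [[Hy [Hx1 Hx2]] Ho]; split; [lra|].
assert (0 < x) by lra; assert (0 < 1 - x) by lra.
destruct Ho as [Ho|Ho]; [left|right]; nra.
Qed.
Lemma Phi_Om h1 h2 z : 0 < h1 < 1 -> 0 < h2 < 1 -> Om h2 z ->
  Om (h1 * h2) (aff 1 0 0 h1 0 0 z) /\ Tin h1 (aff 1 0 0 h1 0 0 z).
Proof.
destruct z as [x y]; unfold Om, Dlt, Tin, aff; simpl; intros H1 H2 [[Hy [Hx1 Hx2]] Ho].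
assert (0 < x) by lra; assert (0 < 1 - x) by lra.
split; [split|].
- split; [nra|split; nra].
- destruct Ho as [Ho|Ho]; [left|right]; nra.
- split; [nra|split; nra].
Qed.
Lemma Phi_Base h1 z : Base z -> aff 1 0 0 h1 0 0 z = z.
Proof. destruct z as [x y]; unfold Base, aff; simpl; intros [-> _]; f_equal; ring. Qed.

Section NF.
Variable V : finType.
Variable e : rel V.
Hypothesis esym : symmetric e.
Hypothesis eirr : irreflexive e.

Local Notation W := (V + V)%type.
Local Notation sE := (great_shadow e).
Local Notation good := (good e).
Local Notation pts := (pts e).

Definition NF1 (X : {set V}) (r : V) (p : W -> pt) : Prop :=
  p (inl r) = (0, 0) /\ p (inr r) = (1, 0) /\ exists h, 0 < h < 1 /\
  (forall w, sv w \in X -> sv w <> r -> Om h (p w)) /\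
  (forall u w t, sv u \in X -> sv w \in X -> sE u w -> ~ (sv u = r /\ sv w = r) -> 0 < t < 1 ->
     Om h (seg (p u) (p w) t)).

Definition KS (z : pt) : Prop :=
  0 <= fst z <= 1 /\ snd z >= 2/5 - 2/5 * fst z /\ snd z <= 3/5 + 2/5 * fst z.
Definition KD (z : pt) : Prop :=
  0 <= fst z <= 1 /\ snd z >= 2/5 * fst z /\ snd z <= 1 - 2/5 * fst z.
Definition Kt (t : bool) := if t then KS else KD.

Definition NF2 (t : bool) (Y : {set V}) (a b : V) (p : W -> pt) : Prop :=
  p (inl a) = (if t then (1, 0) else (1, 2/5)) /\
  p (inr a) = (if t then (0, 2/5) else (0, 0)) /\
  p (inl b) = (if t then (1, 1) else (0, 1)) /\
  p (inr b) = (if t then (0, 3/5) else (1, 3/5)) /\ pts Y p (Kt t).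

Lemma sv_r (w : W) r : sv w = r -> w = inl r \/ w = inr r.
Proof. by case: w => w /= ->; [left|right]. Qed.

Lemma sE_sv (u w : W) : sE u w -> sv u = sv w \/ e (sv u) (sv w).
Proof.
case: u => u; case: w => w //=; try by right.
- by case/orP => [/eqP ->|H]; [left|right; rewrite esym].
- by case/orP => [/eqP ->|H]; [left|right].
Qed.

Lemma rung_seg (p : W -> pt) r u w t : p (inl r) = (0, 0) -> p (inr r) = (1, 0) ->
  sv u = r -> sv w = r -> sE u w -> 0 < t < 1 -> snd (seg (p u) (p w) t) = 0 /\ 0 < fst (seg (p u) (p w) t) < 1.
Proof.
move=> E1 E2 Hu Hw HE Ht.
case: (sv_r Hu) => Eu; case: (sv_r Hw) => Ew; subst u w.
- by move: HE; rewrite /= eirr.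
- rewrite E1 E2 /seg /=; split; [ring|lra].
- rewrite E1 E2 /seg /=; split; [ring|lra].
- by [].
Qed.

Lemma NF1_pts X r p : NF1 X r p -> pts X p (fun z => Dlt z \/ Base z).
Proof.
move=> [E1 [E2 [h [Hh [Hv He]]]]]; split.
- move=> w Hw; case: (eqVneq (sv w) r) => Nw.
  + right; case: (sv_r Nw) => ->; [rewrite E1|rewrite E2]; rewrite /Base /=; lra.
  + left; apply: Om_Dlt; apply: Hv => //; exact/eqP.
- move=> u w t Hu Hw HE Ht.
  case: (eqVneq (sv u) r) => Nu; case: (eqVneq (sv w) r) => Nw.
  + right; have [A1 A2] := rung_seg E1 E2 Nu Nw HE Ht; rewrite /Base; lra.
  + left; apply: Om_Dlt; apply: He => //; case=> _ E; by rewrite E eqxx in Nw.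
  + left; apply: Om_Dlt; apply: He => //; case=> E _; by rewrite E eqxx in Nu.
  + left; apply: Om_Dlt; apply: He => //; case=> E _; by rewrite E eqxx in Nu.
Qed.

End NF.

Definition pt00 : pt := (0, 0).
Definition pt10 : pt := (1, 0).


Section Glue.
Variable V : finType.
Variable e : rel V.
Hypothesis esym : symmetric e.
Hypothesis eirr : irreflexive e.

Local Notation W := (V + V)%type.
Local Notation sE := (great_shadow e).
Local Notation good := (good e).
Local Notation pts := (pts e).
Local Notation NF1 := (NF1 e).

Lemma rung_set (u w : W) r : sv u = r -> sv w = r -> sE u w -> [set u; w] = [set inl r; inr r].
Proof.
move=> Hu Hw HE; case: (sv_r Hu) => Eu; case: (sv_r Hw) => Ew; subst u w => //.
- by move: HE; rewrite /= eirr.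
- exact: set2C.
Qed.

Lemma single (p : W -> pt) r : p (inl r) = (0, 0) -> p (inr r) = (1, 0) ->
  good [set r] p /\ pts [set r] p Base /\ NF1 [set r] r p.
Proof.
move=> E1 E2.
have svr : forall w : W, sv w \in [set r] -> sv w = r by move=> w; rewrite inE => /eqP.
have pv : forall w : W, sv w = r -> p w = (0, 0) \/ p w = (1, 0).
{ by move=> w /sv_r [->|->]; [left|right]. }
split; [split; [|split]|split; [split|]].
- move=> u w /svr Hu /svr Hw; case: (sv_r Hu) => ->; case: (sv_r Hw) => -> //;
  rewrite ?E1 ?E2 => [[H]]; lra.
- move=> u w z t /svr Hu /svr Hw /svr Hz HE Ht Ez.
  have [A1 A2] := rung_seg eirr E1 E2 Hu Hw HE Ht.
  rewrite Ez in A1 A2; case: (pv z Hz) => F; rewrite F /= in A1 A2; lra.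
- move=> u w u' w' s t /svr Hu /svr Hw /svr Hu' /svr Hw' HE HE' Hn.
  by rewrite (rung_set Hu Hw HE) (rung_set Hu' Hw' HE') eqxx in Hn.
- move=> w /svr Hw; case: (pv w Hw) => ->; rewrite /Base /=; lra.
- move=> u w t /svr Hu /svr Hw HE Ht.
  have [A1 A2] := rung_seg eirr E1 E2 Hu Hw HE Ht; rewrite /Base; lra.
- split; [exact: E1|split; [exact: E2|]]; exists (1/2); split; [lra|split].
  + by move=> w /svr.
  + by move=> u w t /svr Hu /svr Hw _ [].
Qed.

Lemma cross1 (X1 X2 : {set V}) x1 x2 (u w : W) :
  (forall x, x \in X1 -> x \in X2 -> False) ->
  (forall x y, x \in X1 -> y \in X2 -> e x y -> x = x1 /\ y = x2) ->
  sv u \in X1 -> sv w \in X2 -> sE u w ->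
  (u = inl x1 /\ w = inl x2) \/ (u = inl x1 /\ w = inr x2) \/ (u = inr x1 /\ w = inl x2).
Proof.
move=> D H; case: u => x; case: w => y //= Hx Hy.
- by move=> /(H x y Hx Hy) [-> ->]; left.
- case/orP => [/eqP E|E]; first by subst; case: (D y).
  by rewrite esym in E; case: (H x y Hx Hy E) => -> ->; right; left.
- case/orP => [/eqP E|E]; first by subst; case: (D y).
  by case: (H x y Hx Hy E) => -> ->; right; right.
Qed.

Lemma cross_r (D : {set V}) r (u w : W) : r \notin D -> sv u = r -> sv w \in D -> sE u w ->
  e r (sv w) /\ ((u = inl r /\ w = inl (sv w)) \/ (u = inl r /\ w = inr (sv w)) \/
                 (u = inr r /\ w = inl (sv w))).
Proof.
move=> Hr Hu Hw HE; case: (sv_r Hu) => Eu; subst u; case: w Hw HE => y /= Hy.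
- by move=> E; split => //; left.
- case/orP => [/eqP E|E]; first by subst; rewrite Hy in Hr.
  by rewrite esym in E; split => //; right; left.
- case/orP => [/eqP E|E]; first by subst; rewrite Hy in Hr.
  by split => //; right; right.
- by [].
Qed.

Lemma glue_split (X1 X2 : {set V}) r (p1 p2 : W -> pt) :
  r \in X1 -> r \in X2 -> (forall x, x \in X1 -> x \in X2 -> x = r) ->
  (forall x y, x \in X1 -> y \in X2 -> x <> r -> y <> r -> e x y = false) ->
  good X1 p1 -> NF1 X1 r p1 -> good X2 p2 -> NF1 X2 r p2 ->
  exists p, good (X1 :|: X2) p /\ NF1 (X1 :|: X2) r p.
Proof.
move=> r1 r2 I12 NE G1 [E1 [E1' [h1 [Hh1 [V1 Ed1]]]]] G2 [E2 [E2' [h2 [Hh2 [V2 Ed2]]]]].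
set Phi := aff 1 0 0 h1 0 0.
set p := fun w : W => if sv w \in X1 then p1 w else Phi (p2 w).
have P1 : forall w, sv w \in X1 -> p w = p1 w by move=> w Hw; rewrite /p Hw.
have P2 : forall w, sv w \in X2 -> p w = Phi (p2 w).
{ move=> w Hw; rewrite /p; case: ifP => // Hw1.
  have Er := I12 _ Hw1 Hw; case: (sv_r Er) => ->.
  - by rewrite E1 E2 /Phi /aff /=; f_equal; ring.
  - by rewrite E1' E2' /Phi /aff /=; f_equal; ring. }
have G1' : good X1 p by apply: (good_ext _ G1) => w Hw; rewrite P1.
have G2' : good X2 p.
{ have det : 1 * h1 - 0 * 0 <> 0 by lra.
  apply: (good_ext _ (good_aff 0 0 det G2)) => w Hw; by rewrite P2. }
have Hh : 0 < h1 * h2 < 1 by split; nra.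
have RV1 : forall w, sv w \in X1 -> Om h1 (p w) \/ Base (p w).
{ move=> w Hw; rewrite P1 //; case: (eqVneq (sv w) r) => N.
  - right; case: (sv_r N) => ->; [rewrite E1|rewrite E1']; rewrite /Base /=; lra.
  - left; apply: V1 => //; exact/eqP. }
have RV2 : forall w, sv w \in X2 -> sv w \notin X1 -> Tin h1 (p w) /\ Om (h1 * h2) (p w).
{ move=> w Hw Hw1; rewrite P2 //.
  have N : sv w <> r by move=> E; rewrite E r1 in Hw1.
  have [A B] := Phi_Om Hh1 Hh2 (V2 w Hw N); split => //. }
have RE1 : forall u w t, sv u \in X1 -> sv w \in X1 -> sE u w -> 0 < t < 1 ->
   Om h1 (seg (p u) (p w) t) \/ (Base (seg (p u) (p w) t) /\ sv u = r /\ sv w = r).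
{ move=> u w t Hu Hw HE Ht; rewrite !P1 //.
  case: (eqVneq (sv u) r) => Nu; case: (eqVneq (sv w) r) => Nw.
  - right; split; last by split.
    have [A B] := rung_seg eirr E1 E1' Nu Nw HE Ht; rewrite /Base; lra.
  - left; apply: Ed1 => //; case=> _ E; by rewrite E eqxx in Nw.
  - left; apply: Ed1 => //; case=> E _; by rewrite E eqxx in Nu.
  - left; apply: Ed1 => //; case=> E _; by rewrite E eqxx in Nu. }
have RE2 : forall u w t, sv u \in X2 -> sv w \in X2 -> sE u w -> ~ (sv u = r /\ sv w = r) ->
   0 < t < 1 -> Tin h1 (seg (p u) (p w) t) /\ Om (h1 * h2) (seg (p u) (p w) t).
{ move=> u w t Hu Hw HE Nr Ht; rewrite !P2 // /Phi -aff_seg.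
  have [A B] := Phi_Om Hh1 Hh2 (Ed2 u w t Hu Hw HE Nr Ht); by split. }
have cls : forall u w, sv u \in X1 :|: X2 -> sv w \in X1 :|: X2 -> sE u w ->
   (sv u \in X1 /\ sv w \in X1) \/ (sv u \in X2 /\ sv w \in X2 /\ ~ (sv u = r /\ sv w = r) /\
      ~ (sv u \in X1 /\ sv w \in X1)).
{ move=> u w; rewrite !inE => Hu Hw HE.
  case: (boolP (sv u \in X1)) => Hu1; case: (boolP (sv w \in X1)) => Hw1.
  - by left.
  - have Hw2 : sv w \in X2 by move: Hw; rewrite (negbTE Hw1).
    case: (boolP (sv u \in X2)) => Hu2.
    + right; split => //; split => //; split; last by case.
      by case=> _ H; rewrite H r1 in Hw1.
    + exfalso; case: (sE_sv esym HE) => E.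
      * by rewrite E Hw2 in Hu2.
      * have Nu : sv u <> r by move=> H; rewrite H r2 in Hu2.
        have Nw : sv w <> r by move=> H; rewrite H r1 in Hw1.
        by rewrite (NE _ _ Hu1 Hw2 Nu Nw) in E.
  - have Hu2 : sv u \in X2 by move: Hu; rewrite (negbTE Hu1).
    case: (boolP (sv w \in X2)) => Hw2.
    + right; split => //; split => //; split; last by case.
      by case=> H _; rewrite H r1 in Hu1.
    + exfalso; case: (sE_sv esym HE) => E.
      * by rewrite -E Hu2 in Hw2.
      * have Nu : sv u <> r by move=> H; rewrite H r1 in Hu1.
        have Nw : sv w <> r by move=> H; rewrite H r2 in Hw2.
        by rewrite esym (NE _ _ Hw1 Hu2 Nw Nu) in E.
  - right; move: Hu Hw; rewrite (negbTE Hu1) (negbTE Hw1) /= => Hu Hw.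
    split => //; split => //; split; last by case.
    by case=> H _; rewrite H r1 in Hu1. }
have vcls : forall w, sv w \in X1 :|: X2 -> sv w \in X1 \/ (sv w \in X2 /\ sv w \notin X1).
{ move=> w; rewrite inE; case: (boolP (sv w \in X1)) => H /=; [by left|by right]. }
have OB_T : forall z, Om h1 z \/ Base z -> Tin h1 z -> False.
{ move=> z [H|H] T; [exact: Om_Tin H T|exact: Base_Tin H T]. }
exists p; split; [split; [|split]|].
- move=> u w Hu Hw E.
  case: (vcls u Hu) => [Hu1|[Hu2 Hu1]]; case: (vcls w Hw) => [Hw1|[Hw2 Hw1]].
  + by case: G1' => H _; apply: H.
  + by exfalso; apply: (OB_T (p u)); [exact: RV1|rewrite E; exact: (RV2 w Hw2 Hw1).1].
  + by exfalso; apply: (OB_T (p w)); [exact: RV1|rewrite -E; exact: (RV2 u Hu2 Hu1).1].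
  + by case: G2' => H _; apply: H.
- move=> u w z t Hu Hw Hz HE Ht Ez.
  case: (cls u w Hu Hw HE) => [[a1 a2]|[a1 [a2 [a3 a4]]]]; case: (vcls z Hz) => [Hz1|[Hz2 Hz1]].
  + by case: G1' => _ [H _]; apply: (H u w z t).
  + apply: (OB_T (p z)); [rewrite -Ez|exact: (RV2 z Hz2 Hz1).1].
    case: (RE1 u w t a1 a2 HE Ht) => [H|[H _]]; [by left|by right].
  + apply: (OB_T (p z)); [exact: RV1|rewrite -Ez; exact: (RE2 u w t a1 a2 HE a3 Ht).1].
  + by case: G2' => _ [H _]; apply: (H u w z t).
- move=> u w u' w' s t Hu Hw Hu' Hw' HE HE' Hn Hs Ht Ez.
  case: (cls u w Hu Hw HE) => [[a1 a2]|[a1 [a2 [a3 a4]]]];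
  case: (cls u' w' Hu' Hw' HE') => [[b1 b2]|[b1 [b2 [b3 b4]]]].
  + by case: G1' => _ [_ H]; apply: (H u w u' w' s t).
  + apply: (OB_T (seg (p u) (p w) s)); last by rewrite Ez; exact: (RE2 u' w' t b1 b2 HE' b3 Ht).1.
    case: (RE1 u w s a1 a2 HE Hs) => [H|[H _]]; [by left|by right].
  + apply: (OB_T (seg (p u') (p w') t)); last by rewrite -Ez; exact: (RE2 u w s a1 a2 HE a3 Hs).1.
    case: (RE1 u' w' t b1 b2 HE' Ht) => [H|[H _]]; [by left|by right].
  + by case: G2' => _ [_ H]; apply: (H u w u' w' s t).
- split; [by rewrite P1|split; [by rewrite P1|]].
  exists (h1 * h2); split => //; split.
  + move=> w Hw Nw; case: (vcls w Hw) => [Hw1|[Hw2 Hw1]].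
    * rewrite P1 //; apply: Om_mono => //; exact: V1.
    * exact: (RV2 w Hw2 Hw1).2.
  + move=> u w t Hu Hw HE Nr Ht.
    case: (cls u w Hu Hw HE) => [[a1 a2]|[a1 [a2 [a3 a4]]]].
    * rewrite !P1 //; apply: Om_mono => //; exact: Ed1.
    * exact: (RE2 u w t a1 a2 HE a3 Ht).2.
Qed.

Lemma attach_r (D : {set V}) r (p : W -> pt) h (B : pt -> Prop) :
  r \notin D -> 0 < h < 1 -> p (inl r) = (0, 0) -> p (inr r) = (1, 0) ->
  good D p -> pts D p B -> (forall z, B z -> Om h z) ->
  (forall u w t, sv u = r -> sv w \in D -> sE u w -> 0 < t < 1 ->
      Om h (seg (p u) (p w) t) /\ ~ B (seg (p u) (p w) t)) ->
  (forall u w u' w' s t, sv u = r -> sv w \in D -> sv u' = r -> sv w' \in D ->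
      sE u w -> sE u' w' -> (u, w) <> (u', w') -> 0 < s < 1 -> 0 < t < 1 ->
      seg (p u) (p w) s <> seg (p u') (p w') t) ->
  good (r |: D) p /\ NF1 (r |: D) r p.
Proof.
move=> rD Hh E1 E2 GD PD BO HC HCC.
have [G0 [P0 _]] := single E1 E2.
have svr : forall w : W, sv w \in [set r] -> sv w = r by move=> w; rewrite inE => /eqP.
have [G P] := combine esym G0 GD P0 PD (C := fun z => Om h z /\ ~ B z)
  (fun z H1 H2 => Base_Dlt H1 (Om_Dlt (BO z H2)))
  (fun z H1 H2 => Base_Dlt H2 (Om_Dlt H1.1)) (fun z H1 H2 => H1.2 H2)
  (fun u w t Hu => HC u w t (svr u Hu))
  (fun u w u' w' s t Hu Hw Hu' Hw' => HCC u w u' w' s t (svr u Hu) Hw (svr u' Hu') Hw').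
split => //.
split => //; split => //; exists h; split => //; split.
- move=> w; rewrite !inE => /orP [/eqP E N|Hw _]; first by case: N.
  by apply: BO; case: PD => H _; apply: H.
- move=> u w t; rewrite !inE => /orP [/eqP Hu|Hu] /orP [/eqP Hw|Hw] HE Nr Ht.
  + by case: Nr.
  + exact: (HC u w t Hu Hw HE Ht).1.
  + rewrite seg_sym; apply: (HC w u (1 - t) Hw Hu _ _).1; [by rewrite sE_sym|lra].
  + by apply: BO; case: PD => _ H; apply: H.
Qed.

End Glue.


Definition img (f : pt -> pt) (A : pt -> Prop) (z : pt) : Prop := exists z0, A z0 /\ z = f z0.
Definition DB (z : pt) : Prop := Dlt z \/ Base z.

Definition psiB := aff 0 (1/10) (1/4) (-1/40) (1/2) (1/2).
Definition kap := aff (1/4) 0 (1/4) (3/5) (1/4) (-1/20).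
Definition psiS := aff (-1) (-1/2) (2/5) (3/10) 1 0.
Definition phiS := aff (-1) 0 (-1/5) (1/2) 1 (1/2).
Definition psiD := aff (-1) (-1/2) (-2/5) (3/10) 1 (2/5).
Definition phiD := aff (-1) 0 (1/5) (1/2) 1 (3/10).
Definition psiZ := aff (-1) (-1/2) (-2/5) (4/5) 1 (2/5).
Definition chiZ := aff 1 (1/2) (-2/5) (-2/5) 0 1.

Ltac pt_goal :=
  match goal with
  | |- _ /\ _ => split; pt_goal
  | |- _ \/ _ => first [left; pt_goal | right; pt_goal]
  | |- ~ _ => intro; pt_hyps
  | _ => lra
  end
with pt_hyps :=
  repeat match goal with
  | z : pt |- _ => destruct z
  | H : exists _, _ |- _ => destruct H
  | H : _ /\ _ |- _ => destruct H
  | H : (_, _) = (_, _) |- _ => injection H; clear H; intros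
  end;
  simpl in *;
  repeat match goal with
  | H : (_, _) = (_, _) |- _ => injection H; clear H; intros
  end;
  repeat match goal with
  | H : _ \/ _ |- _ => destruct H
  end;
  try lra.

Ltac pt_solve :=
  unfold img, DB, psiB, kap, psiS, phiS, psiD, phiD, psiZ, chiZ, seg, aff, Om, Tin, Dlt, Base, KS, KD in *; simpl in *;
  pt_hyps; pt_goal.

Section Tmpl.
Variable V : finType.
Variable e : rel V.
Hypothesis esym : symmetric e.
Hypothesis eirr : irreflexive e.

Local Notation W := (V + V)%type.
Local Notation sE := (great_shadow e).
Local Notation good := (good e).
Local Notation pts := (pts e).
Local Notation NF1 := (NF1 e).


Lemma pts_img (X : {set V}) (p : W -> pt) A a b c d f g : a * d - b * c <> 0 ->
  pts X p A -> pts X (fun w => aff a b c d f g (p w)) (img (aff a b c d f g) A).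
Proof. move=> det; apply: pts_aff => z Hz; by exists z. Qed.

Lemma tmpl_bridge (D : {set V}) r c (p1 : W -> pt) :
  r \notin D -> c \in D -> (forall y, y \in D -> e r y -> y = c) ->
  good D p1 -> NF1 D c p1 -> exists p, good (r |: D) p /\ NF1 (r |: D) r p.
Proof.
move=> rD cD Nc G1 N1.
have det : 0 * (-1/40) - (1/10) * (1/4) <> 0 by lra.
set p := fun w : W => if sv w == r then (if w is inl _ then (0, 0) else (1, 0)) else psiB (p1 w).
have PD : forall w, sv w \in D -> p w = psiB (p1 w).
{ move=> w Hw; rewrite /p; case: eqP => // E; by move: Hw; rewrite E (negbTE rD). }
have E1 : p (inl r) = (0, 0) by rewrite /p /= eqxx.
have E2 : p (inr r) = (1, 0) by rewrite /p /= eqxx.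
have [Ec1 [Ec2 _]] := N1.
have Pc1 : p (inl c) = (1/2, 1/2).
{ rewrite PD // Ec1 /psiB /aff /=; f_equal; field. }
have Pc2 : p (inr c) = (1/2, 3/4).
{ rewrite PD // Ec2 /psiB /aff /=; f_equal; field. }
have GD : good D p by apply: (good_ext _ (good_aff _ _ det G1)) => w Hw; rewrite PD.
have PB : pts D p (img psiB DB).
{ apply: (pts_ext _ (pts_img _ _ det (NF1_pts eirr N1))) => w Hw; by rewrite PD. }
have cr : forall u w, sv u = r -> sv w \in D -> sE u w ->
   (u = inl r /\ w = inl c) \/ (u = inl r /\ w = inr c) \/ (u = inr r /\ w = inl c).
{ move=> u w Hu Hw HE; have [He H] := cross_r esym rD Hu Hw HE.
  have Ew := Nc _ Hw He; rewrite Ew in H; exact: H. }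
have [G N] : good (r |: D) p /\ NF1 (r |: D) r p.
{ apply: (attach_r esym eirr (h := 1/4) rD _ E1 E2 GD PB).
  - lra.
  - move=> z Hz; rewrite /psiB in Hz; pt_solve.
  - move=> u w t Hu Hw HE Ht.
    case: (cr u w Hu Hw HE) => [[-> ->]|[[-> ->]|[-> ->]]]; rewrite ?E1 ?E2 ?Pc1 ?Pc2;
      split; try (move=> Hz; rewrite /psiB /DB in Hz); pt_solve.
  - move=> u w u' w' s t Hu Hw Hu' Hw' HE HE'.
    case: (cr u w Hu Hw HE) => [[-> ->]|[[-> ->]|[-> ->]]];
    case: (cr u' w' Hu' Hw' HE') => [[-> ->]|[[-> ->]|[-> ->]]] => Hn;
    try (by case: Hn); move=> Hs Ht;
    rewrite ?E1 ?E2 ?Pc1 ?Pc2 => Hz; pt_solve. }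
by exists p.
Qed.

End Tmpl.


Section Tmpl2.
Variable V : finType.
Variable e : rel V.
Hypothesis esym : symmetric e.
Hypothesis eirr : irreflexive e.

Local Notation W := (V + V)%type.
Local Notation sE := (great_shadow e).
Local Notation good := (good e).
Local Notation pts := (pts e).
Local Notation NF1 := (NF1 e).
Local Notation NF2 := (NF2 e).

Definition segC (A B K : pt -> Prop) (P Q : pt) :=
  forall t, 0 < t < 1 -> K (seg P Q t) /\ ~ A (seg P Q t) /\ ~ B (seg P Q t).
Definition segD (P Q P' Q' : pt) :=
  forall s t, 0 < s < 1 -> 0 < t < 1 -> seg P Q s <> seg P' Q' t.

Lemma segD_sym P Q P' Q' : segD P Q P' Q' -> segD P' Q' P Q.
Proof. move=> H s t Hs Ht E; exact: (H t s Ht Hs (sym_eq E)). Qed.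

Lemma two_piece (H1 R : {set V}) a x2 (p : W -> pt) (A B K : pt -> Prop) :
  (forall x, x \in H1 -> x \in R -> False) ->
  (forall x y, x \in H1 -> y \in R -> e x y -> x = a /\ y = x2) ->
  good H1 p -> good R p -> pts H1 p A -> pts R p B ->
  (forall z, A z -> B z -> False) -> (forall z, A z -> K z) -> (forall z, B z -> K z) ->
  segC A B K (p (inl a)) (p (inl x2)) -> segC A B K (p (inl a)) (p (inr x2)) ->
  segC A B K (p (inr a)) (p (inl x2)) ->
  segD (p (inl a)) (p (inl x2)) (p (inl a)) (p (inr x2)) ->
  segD (p (inl a)) (p (inl x2)) (p (inr a)) (p (inl x2)) ->
  segD (p (inl a)) (p (inr x2)) (p (inr a)) (p (inl x2)) ->
  good (H1 :|: R) p /\ pts (H1 :|: R) p K.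
Proof.
move=> Dj Ed G1 G2 P1 P2 AB AK BK C1 C2 C3 D12 D13 D23.
have cr := fun u w => @cross1 _ _ esym H1 R a x2 u w Dj Ed.
have [G P] : good (H1 :|: R) p /\ pts (H1 :|: R) p (fun z => A z \/ B z \/ (K z /\ ~ A z /\ ~ B z)).
{ apply: (combine esym G1 G2 P1 P2 AB (fun z (H1 : K z /\ ~ A z /\ ~ B z) H2 => H1.2.1 H2)
     (fun z (H1 : K z /\ ~ A z /\ ~ B z) H2 => H1.2.2 H2)).
  - move=> u w t Hu Hw HE Ht.
    case: (cr u w Hu Hw HE) => [[-> ->]|[[-> ->]|[-> ->]]]; [exact: C1|exact: C2|exact: C3].
  - move=> u w u' w' s t Hu Hw Hu' Hw' HE HE'.
    case: (cr u w Hu Hw HE) => [[-> ->]|[[-> ->]|[-> ->]]];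
    case: (cr u' w' Hu' Hw' HE') => [[-> ->]|[[-> ->]|[-> ->]]] => Hn; try (by case: Hn);
    move=> Hs Ht; [exact: D12|exact: D13|exact: (segD_sym D12)|exact: D23|
                   exact: (segD_sym D13)|exact: (segD_sym D23)]. }
split => //; apply: pts_mono P => z [H|[H|H]]; [exact: AK|exact: BK|exact: H.1].
Qed.

Lemma NF1_apos (X : {set V}) r (p : W -> pt) : NF1 X r p -> p (inl r) = (0, 0) /\ p (inr r) = (1, 0).
Proof. by case=> ? [? _]. Qed.

Lemma tmpl_stepS (H1 R : {set V}) a a2 b (p1 p2 : W -> pt) :
  (forall x, x \in H1 -> x \in R -> False) ->
  (forall x y, x \in H1 -> y \in R -> e x y -> x = a /\ y = a2) ->
  a \in H1 -> a2 \in R -> b \in R ->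
  good H1 p1 -> NF1 H1 a p1 -> good R p2 -> NF2 false R a2 b p2 ->
  exists p, good (H1 :|: R) p /\ NF2 true (H1 :|: R) a b p.
Proof.
move=> Dj Ed aH a2R bR G1 N1 G2 [Qa [Qa' [Qb [Qb' PR]]]].
have [Pa Pa'] := NF1_apos N1.
have det1 : (-1) * (3/10) - (-1/2) * (2/5) <> 0 by lra.
have det2 : (-1) * (1/2) - 0 * (-1/5) <> 0 by lra.
set p := fun w : W => if sv w \in H1 then psiS (p1 w) else phiS (p2 w).
have PH : forall w, sv w \in H1 -> p w = psiS (p1 w) by move=> w Hw; rewrite /p Hw.
have PR' : forall w, sv w \in R -> p w = phiS (p2 w).
{ move=> w Hw; rewrite /p; case: ifP => // H; by case: (Dj _ H Hw). }
have GH : good H1 p by apply: (good_ext _ (good_aff _ _ det1 G1)) => w Hw; rewrite PH.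
have GR : good R p by apply: (good_ext _ (good_aff _ _ det2 G2)) => w Hw; rewrite PR'.
have AH : pts H1 p (img psiS DB).
{ apply: (pts_ext _ (pts_img _ _ det1 (NF1_pts eirr N1))) => w Hw; by rewrite PH. }
have BR : pts R p (img phiS KD).
{ apply: (pts_ext _ (pts_img _ _ det2 PR)) => w Hw; by rewrite PR'. }
have Ea : p (inl a) = (1, 0) by rewrite PH // Pa /psiS /aff /=; f_equal; field.
have Ea' : p (inr a) = (0, 2/5) by rewrite PH // Pa' /psiS /aff /=; f_equal; field.
have Ea2 : p (inl a2) = (0, 1/2) by rewrite PR' // Qa /phiS /aff /=; f_equal; field.
have Ea2' : p (inr a2) = (1, 1/2) by rewrite PR' // Qa' /phiS /aff /=; f_equal; field.
have Eb : p (inl b) = (1, 1) by rewrite PR' // Qb /phiS /aff /=; f_equal; field.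
have Eb' : p (inr b) = (0, 3/5) by rewrite PR' // Qb' /phiS /aff /=; f_equal; field.
have [G P] : good (H1 :|: R) p /\ pts (H1 :|: R) p KS.
{ apply: (two_piece Dj Ed GH GR AH BR).
  - move=> z H1' H2'; pt_solve.
  - move=> z H; pt_solve.
  - move=> z H; pt_solve.
  - rewrite Ea Ea2 => t Ht; pt_solve.
  - rewrite Ea Ea2' => t Ht; pt_solve.
  - rewrite Ea' Ea2 => t Ht; pt_solve.
  - rewrite Ea Ea2 Ea2' => s t Hs Ht Hz; pt_solve.
  - rewrite Ea Ea2 Ea' => s t Hs Ht Hz; pt_solve.
  - rewrite Ea Ea2 Ea' Ea2' => s t Hs Ht Hz; pt_solve. }
by exists p; split => //; split => //; split => //; split => //; split.
Qed.

Lemma tmpl_stepD (H1 R : {set V}) a a2 b (p1 p2 : W -> pt) :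
  (forall x, x \in H1 -> x \in R -> False) ->
  (forall x y, x \in H1 -> y \in R -> e x y -> x = a /\ y = a2) ->
  a \in H1 -> a2 \in R -> b \in R ->
  good H1 p1 -> NF1 H1 a p1 -> good R p2 -> NF2 true R a2 b p2 ->
  exists p, good (H1 :|: R) p /\ NF2 false (H1 :|: R) a b p.
Proof.
move=> Dj Ed aH a2R bR G1 N1 G2 [Qa [Qa' [Qb [Qb' PR]]]].
have [Pa Pa'] := NF1_apos N1.
have det1 : (-1) * (3/10) - (-1/2) * (-2/5) <> 0 by lra.
have det2 : (-1) * (1/2) - 0 * (1/5) <> 0 by lra.
set p := fun w : W => if sv w \in H1 then psiD (p1 w) else phiD (p2 w).
have PH : forall w, sv w \in H1 -> p w = psiD (p1 w) by move=> w Hw; rewrite /p Hw.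
have PR' : forall w, sv w \in R -> p w = phiD (p2 w).
{ move=> w Hw; rewrite /p; case: ifP => // H; by case: (Dj _ H Hw). }
have GH : good H1 p by apply: (good_ext _ (good_aff _ _ det1 G1)) => w Hw; rewrite PH.
have GR : good R p by apply: (good_ext _ (good_aff _ _ det2 G2)) => w Hw; rewrite PR'.
have AH : pts H1 p (img psiD DB).
{ apply: (pts_ext _ (pts_img _ _ det1 (NF1_pts eirr N1))) => w Hw; by rewrite PH. }
have BR : pts R p (img phiD KS).
{ apply: (pts_ext _ (pts_img _ _ det2 PR)) => w Hw; by rewrite PR'. }
have Ea : p (inl a) = (1, 2/5) by rewrite PH // Pa /psiD /aff /=; f_equal; field.
have Ea' : p (inr a) = (0, 0) by rewrite PH // Pa' /psiD /aff /=; f_equal; field.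
have Ea2 : p (inl a2) = (0, 1/2) by rewrite PR' // Qa /phiD /aff /=; f_equal; field.
have Ea2' : p (inr a2) = (1, 1/2) by rewrite PR' // Qa' /phiD /aff /=; f_equal; field.
have Eb : p (inl b) = (0, 1) by rewrite PR' // Qb /phiD /aff /=; f_equal; field.
have Eb' : p (inr b) = (1, 3/5) by rewrite PR' // Qb' /phiD /aff /=; f_equal; field.
have [G P] : good (H1 :|: R) p /\ pts (H1 :|: R) p KD.
{ apply: (two_piece Dj Ed GH GR AH BR).
  - move=> z H1' H2'; pt_solve.
  - move=> z H; pt_solve.
  - move=> z H; pt_solve.
  - rewrite Ea Ea2 => t Ht; pt_solve.
  - rewrite Ea Ea2' => t Ht; pt_solve.
  - rewrite Ea' Ea2 => t Ht; pt_solve.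
  - rewrite Ea Ea2 Ea2' => s t Hs Ht Hz; pt_solve.
  - rewrite Ea Ea2 Ea' => s t Hs Ht Hz; pt_solve.
  - rewrite Ea Ea2 Ea' Ea2' => s t Hs Ht Hz; pt_solve. }
by exists p; split => //; split => //; split => //; split => //; split.
Qed.

Lemma tmpl_baseD (H1 R : {set V}) a b (p1 p2 : W -> pt) :
  (forall x, x \in H1 -> x \in R -> False) ->
  (forall x y, x \in H1 -> y \in R -> e x y -> x = a /\ y = b) ->
  a \in H1 -> b \in R ->
  good H1 p1 -> NF1 H1 a p1 -> good R p2 -> NF1 R b p2 ->
  exists p, good (H1 :|: R) p /\ NF2 false (H1 :|: R) a b p.
Proof.
move=> Dj Ed aH bR G1 N1 G2 N2.
have [Pa Pa'] := NF1_apos N1.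
have [Qb Qb'] := NF1_apos N2.
have det1 : (-1) * (4/5) - (-1/2) * (-2/5) <> 0 by lra.
have det2 : 1 * (-2/5) - (1/2) * (-2/5) <> 0 by lra.
set p := fun w : W => if sv w \in H1 then psiZ (p1 w) else chiZ (p2 w).
have PH : forall w, sv w \in H1 -> p w = psiZ (p1 w) by move=> w Hw; rewrite /p Hw.
have PR' : forall w, sv w \in R -> p w = chiZ (p2 w).
{ move=> w Hw; rewrite /p; case: ifP => // H; by case: (Dj _ H Hw). }
have GH : good H1 p by apply: (good_ext _ (good_aff _ _ det1 G1)) => w Hw; rewrite PH.
have GR : good R p by apply: (good_ext _ (good_aff _ _ det2 G2)) => w Hw; rewrite PR'.
have AH : pts H1 p (img psiZ DB).
{ apply: (pts_ext _ (pts_img _ _ det1 (NF1_pts eirr N1))) => w Hw; by rewrite PH. }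
have BR : pts R p (img chiZ DB).
{ apply: (pts_ext _ (pts_img _ _ det2 (NF1_pts eirr N2))) => w Hw; by rewrite PR'. }
have Ea : p (inl a) = (1, 2/5) by rewrite PH // Pa /psiZ /aff /=; f_equal; field.
have Ea' : p (inr a) = (0, 0) by rewrite PH // Pa' /psiZ /aff /=; f_equal; field.
have Eb : p (inl b) = (0, 1) by rewrite PR' // Qb /chiZ /aff /=; f_equal; field.
have Eb' : p (inr b) = (1, 3/5) by rewrite PR' // Qb' /chiZ /aff /=; f_equal; field.
have [G P] : good (H1 :|: R) p /\ pts (H1 :|: R) p KD.
{ apply: (two_piece Dj Ed GH GR AH BR).
  - move=> z H1' H2'; pt_solve.
  - move=> z H; pt_solve.
  - move=> z H; pt_solve.
  - rewrite Ea Eb => t Ht; pt_solve.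
  - rewrite Ea Eb' => t Ht; pt_solve.
  - rewrite Ea' Eb => t Ht; pt_solve.
  - rewrite Ea Eb Eb' => s t Hs Ht Hz; pt_solve.
  - rewrite Ea Eb Ea' => s t Hs Ht Hz; pt_solve.
  - rewrite Ea Eb Ea' Eb' => s t Hs Ht Hz; pt_solve. }
by exists p; split => //; split => //; split => //; split => //; split.
Qed.

Lemma tmpl_close (Y : {set V}) r a b (p1 : W -> pt) :
  r \notin Y -> a \in Y -> b \in Y -> (forall y, y \in Y -> e r y -> y = a \/ y = b) ->
  good Y p1 -> NF2 true Y a b p1 -> exists p, good (r |: Y) p /\ NF1 (r |: Y) r p.
Proof.
move=> rY aY bY Nab G1 [Qa [Qa' [Qb [Qb' PY]]]].
have det : (1/4) * (3/5) - 0 * (1/4) <> 0 by lra.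
set p := fun w : W => if sv w == r then (if w is inl _ then (0, 0) else (1, 0)) else kap (p1 w).
have PD : forall w, sv w \in Y -> p w = kap (p1 w).
{ move=> w Hw; rewrite /p; case: eqP => // E; by move: Hw; rewrite E (negbTE rY). }
have E1 : p (inl r) = (0, 0) by rewrite /p /= eqxx.
have E2 : p (inr r) = (1, 0) by rewrite /p /= eqxx.
have Ea : p (inl a) = (1/2, 1/5) by rewrite PD // Qa /kap /aff /=; f_equal; field.
have Ea' : p (inr a) = (1/4, 19/100) by rewrite PD // Qa' /kap /aff /=; f_equal; field.
have Eb : p (inl b) = (1/2, 4/5) by rewrite PD // Qb /kap /aff /=; f_equal; field.
have Eb' : p (inr b) = (1/4, 31/100) by rewrite PD // Qb' /kap /aff /=; f_equal; field.
have GD : good Y p by apply: (good_ext _ (good_aff _ _ det G1)) => w Hw; rewrite PD.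
have PB : pts Y p (img kap KS).
{ apply: (pts_ext _ (pts_img _ _ det PY)) => w Hw; by rewrite PD. }
have cr : forall u w, sv u = r -> sv w \in Y -> sE u w ->
   (u = inl r /\ w = inl a) \/ (u = inl r /\ w = inr a) \/ (u = inr r /\ w = inl a) \/
   (u = inl r /\ w = inl b) \/ (u = inl r /\ w = inr b) \/ (u = inr r /\ w = inl b).
{ move=> u w Hu Hw HE; have [He H] := cross_r esym rY Hu Hw HE.
  case: (Nab _ Hw He) => Ew; rewrite Ew in H.
  - by case: H => [H|[H|H]]; [left|right; left|right; right; left].
  - by case: H => [H|[H|H]]; [right; right; right; left|do 4 right; left|do 5 right]. }
have [G N] : good (r |: Y) p /\ NF1 (r |: Y) r p.
{ apply: (attach_r esym eirr (h := 1/10) rY _ E1 E2 GD PB).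
  - lra.
  - move=> z Hz; pt_solve.
  - move=> u w t Hu Hw HE Ht.
    case: (cr u w Hu Hw HE) => [[-> ->]|[[-> ->]|[[-> ->]|[[-> ->]|[[-> ->]|[-> ->]]]]]];
      rewrite ?E1 ?E2 ?Ea ?Ea' ?Eb ?Eb'; split; pt_solve.
  - move=> u w u' w' s t Hu Hw Hu' Hw' HE HE'.
    case: (cr u w Hu Hw HE) => [[-> ->]|[[-> ->]|[[-> ->]|[[-> ->]|[[-> ->]|[-> ->]]]]]];
    case: (cr u' w' Hu' Hw' HE') => [[-> ->]|[[-> ->]|[[-> ->]|[[-> ->]|[[-> ->]|[-> ->]]]]]] => Hn;
    try (by case: Hn); move=> Hs Ht;
    rewrite ?E1 ?E2 ?Ea ?Ea' ?Eb ?Eb' => Hz; pt_solve. }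
by exists p.
Qed.

End Tmpl2.


Local Close Scope R_scope.

Section GraphTh.
Variable V : finType.
Variable e : rel V.
Hypothesis esym : symmetric e.
Hypothesis eirr : irreflexive e.

Definition eX (X : {set V}) : rel V := fun x y => [&& x \in X, y \in X & e x y].
Definition connX (X : {set V}) : Prop := forall x y, x \in X -> y \in X -> connect (eX X) x y.

Lemma eX_sym (X : {set V}) : symmetric (eX X).
Proof. by move=> x y; rewrite /eX esym; case: (x \in X); case: (y \in X). Qed.

Lemma connX_sym (X : {set V}) x y : connect (eX X) x y -> connect (eX X) y x.
Proof. by rewrite (sym_connect_sym (@eX_sym X)). Qed.

Lemma upath (E : rel V) x y : connect E x y ->
  exists s, [/\ path E x s, last x s = y & uniq (x :: s)].
Proof. by move/connectP => [p Hp ->]; case: (shortenP Hp) => s Hs Hu _; exists s. Qed.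

Lemma path_eX (X : {set V}) x s : path (eX X) x s -> path e x s /\ all (fun v => v \in X) s.
Proof.
elim: s x => [|y s IH] x //= /andP [/and3P [_ Hy Hxy] Hp].
by have [A B] := IH _ Hp; rewrite Hxy A Hy B.
Qed.

Lemma walk (E : rel V) (P : pred V) t z p : path E z p -> last z p = t -> P z -> ~~ P t ->
  (forall x y, P x -> E x y -> y != t -> P y) ->
  exists x, [/\ P x, E x t & connect [rel u v | [&& P u, P v & E u v]] z x].
Proof.
elim: p z => [|y p IH] z /=.
- by move=> _ -> Pt nPt; rewrite Pt in nPt.
- move=> /andP [Ezy Hp] Hl Pz nPt Pres.
  case: (eqVneq y t) => [Eyt|Nyt].
  + by exists z; rewrite -Eyt; split => //; apply: connect0.
  + have Py := Pres _ _ Pz Ezy Nyt.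
    have [x [Px Ext Cx]] := IH y Hp Hl Py nPt Pres.
    exists x; split => //; apply: connect_trans Cx; apply: connect1; by rewrite /= Pz Py Ezy.
Qed.

Definition comp (D : {set V}) c := [set z in D | connect (eX D) c z].

Lemma comp_sub (D : {set V}) c : comp D c \subset D.
Proof. by apply/subsetP => z; rewrite inE => /andP []. Qed.

Lemma comp_closed (D : {set V}) c x y : x \in comp D c -> y \in D -> e x y -> y \in comp D c.
Proof.
rewrite !inE => /andP [xD cx] yD exy; rewrite yD /=.
apply: connect_trans cx _; apply: connect1; by rewrite /eX xD yD exy.
Qed.

Lemma comp_conn (D : {set V}) c : c \in D -> connX (comp D c).
Proof.
move=> cD.
have aux : forall p x, x \in comp D c -> path (eX D) x p -> path (eX (comp D c)) x p.
{ elim=> [|y p IH] x //= xC /andP [/and3P [xD yD exy] Hp].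
  have yC : y \in comp D c := comp_closed xC yD exy.
  by rewrite /eX xC yC exy /=; apply: IH. }
have cC : c \in comp D c by rewrite inE cD connect0.
have H : forall z, z \in comp D c -> connect (eX (comp D c)) c z.
{ move=> z; rewrite inE => /andP [zD /connectP [p Hp ->]].
  apply/connectP; exists p => //; exact: aux. }
move=> x y Hx Hy; apply: connect_trans (H y Hy); apply: connX_sym; exact: H.
Qed.

Lemma connX_eq (X Y : {set V}) : X = Y -> connX X -> connX Y. Proof. by move=> ->. Qed.

Hypothesis Hcac : forall c1 c2 : seq V, is_graph_cycle e c1 -> is_graph_cycle e c2 ->
    cycle_edges c1 != cycle_edges c2 -> [disjoint cycle_edges c1 & cycle_edges c2].

Lemma core x u s1 s2 : path e u s1 -> path e u s2 -> uniq (x :: u :: s1) -> uniq (x :: u :: s2) ->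
  e x u -> e (last u s1) x -> e (last u s2) x -> s1 != [::] -> s2 != [::] ->
  forall v, v \in s1 -> v \notin u :: s2 -> False.
Proof.
move=> P1 P2 U1 U2 exu L1 L2 N1 N2 v v1 v2.
set c1 := x :: u :: s1; set c2 := x :: u :: s2.
have C1 : is_graph_cycle e c1.
{ rewrite /is_graph_cycle U1 /= !ltnS lt0n size_eq0 N1 /=.
  by rewrite -/(rcons (u :: s1) x) rcons_path /= exu P1 L1. }
have C2 : is_graph_cycle e c2.
{ rewrite /is_graph_cycle U2 /= !ltnS lt0n size_eq0 N2 /=.
  by rewrite -/(rcons (u :: s2) x) rcons_path /= exu P2 L2. }
have nx1 : next c1 x = u by rewrite /c1 /next /= eqxx.
have nx2 : next c2 x = u by rewrite /c2 /next /= eqxx.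
have E1 : [set x; u] \in cycle_edges c1.
{ apply/imsetP; exists x; first by rewrite /c1 mem_head. by rewrite nx1. }
have E2 : [set x; u] \in cycle_edges c2.
{ apply/imsetP; exists x; first by rewrite /c2 mem_head. by rewrite nx2. }
have vx : v != x.
{ apply/eqP => E; subst v; move: U1; rewrite /= inE negb_or => /andP [/andP [_ H] _].
  by rewrite v1 in H. }
have vc2 : v \notin c2 by rewrite /c2 inE negb_or vx v2.
have Ne : cycle_edges c1 != cycle_edges c2.
{ apply/negP => /eqP Eq.
  have : [set v; next c1 v] \in cycle_edges c1.
  { apply/imsetP; exists v => //; by rewrite /c1 !inE v1 !orbT. }
  rewrite Eq => /imsetP [z zc2 Ez].
  have : v \in [set z; next c2 z] by rewrite -Ez !inE eqxx.
  rewrite !inE => /orP [/eqP Evz|/eqP Evz].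
  - by rewrite Evz zc2 in vc2.
  - by rewrite Evz mem_next zc2 in vc2. }
have D := Hcac C1 C2 Ne.
by rewrite (disjointFr D E1) in E2.
Qed.


Lemma mem_last_neq (x y : V) s : last x s = y -> y != x -> y \in s.
Proof. move=> <- N; have := mem_last x s; by rewrite inE (negbTE N). Qed.

Lemma K2 (Y : {set V}) a b qi u w : a \in Y -> b \in Y -> a != b ->
  qi != [::] -> path e b qi -> e (last b qi) a -> uniq qi -> all (fun v => v \notin Y) qi ->
  u \in comp (Y :\ a) b -> w \in comp (Y :\ a) b -> u != w -> e a u -> e a w -> False.
Proof.
move=> aY bY ab Nq Pq Lq Uq Aq uR wR uw eau eaw.
set R := comp (Y :\ a) b.
have bD : b \in Y :\ a by rewrite !inE eq_sym ab bY.
have connR := comp_conn bD.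
have bR : b \in R by rewrite inE bD connect0.
have inRY : forall x, x \in R -> x \in Y /\ x != a.
{ move=> x /(subsetP (comp_sub (Y :\ a) b)); rewrite !inE => /andP [H1 H2]; by split. }
have [s [Ps Ls Us]] := upath (connR u w uR wR).
have [s' [Ps' Ls' Us']] := upath (connR u b uR bR).
have [Pe As] := path_eX Ps.
have [Pe' As'] := path_eX Ps'.
have notinY : forall x, x \in qi -> x \notin Y by move=> x Hx; exact: (allP Aq).
have aNR : forall s0 : seq V, all (fun v => v \in R) s0 -> a \notin s0.
{ move=> s0 H; apply/negP => Ha; have := inRY a (allP H a Ha); case=> _; by rewrite eqxx. }
have inY : forall s0 : seq V, all (fun v => v \in R) s0 -> forall x, x \in a :: s0 -> x \in Y.
{ move=> s0 H x; rewrite inE => /orP [/eqP ->|Hx] //; exact: (inRY x (allP H x Hx)).1. }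
have Hu' : all (fun v => v \in R) (u :: s') by rewrite /= uR As'.
have Hu : all (fun v => v \in R) (u :: s) by rewrite /= uR As.
case: qi Nq Pq Lq Uq Aq notinY => [//|v q] _ Pq Lq Uq Aq notinY.
apply: (@core a u (s' ++ v :: q) s _ _ _ _ eau _ _ _ _ v).
- by rewrite cat_path Pe' Ls' Pq.
- exact: Pe.
- rewrite -[a :: u :: s' ++ v :: q]/((a :: u :: s') ++ v :: q) cat_uniq Uq andbT.
  apply/andP; split; first by rewrite cons_uniq (aNR _ Hu') Us'.
  apply/hasPn => x Hx; apply/negP => Hin.
  by have := notinY x Hx; rewrite (inY _ Hu' x Hin).
- by rewrite cons_uniq (aNR _ Hu) Us.
- by rewrite last_cat Ls'.
- by rewrite Ls esym.
- by rewrite -size_eq0 size_cat /= addnS.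
- apply/negP => /eqP E; move: Ls; rewrite E /= => E'; by rewrite E' eqxx in uw.
- by rewrite mem_cat mem_head orbT.
- apply/negP => Hin; have := notinY v (mem_head v q).
  by rewrite (inY _ Hu v); rewrite // inE Hin orbT.
Qed.

Lemma K1 (D : {set V}) r a b c : r \notin D -> connX D -> a \in D -> b \in D -> c \in D ->
  a != b -> a != c -> b != c -> e r a -> e r b -> e r c -> False.
Proof.
move=> rD cD aD bD cD' ab ac bc era erb erc.
have [s [Ps Ls Us]] := upath (cD a b aD bD).
have [t [Pt Lt Ut]] := upath (cD a c aD cD').
have [Pe As] := path_eX Ps.
have [Pe' At] := path_eX Pt.
have rN : forall s0 : seq V, all (fun v => v \in D) s0 -> r \notin s0.
{ move=> s0 H; apply/negP => Hr; by rewrite (allP H r Hr) in rD. }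
have Us1 : uniq (r :: a :: s) by rewrite cons_uniq Us andbT; apply: rN; rewrite /= aD As.
have Ut1 : uniq (r :: a :: t) by rewrite cons_uniq Ut andbT; apply: rN; rewrite /= aD At.
have bs : b \in s by apply: mem_last_neq Ls _; rewrite eq_sym.
have ct : c \in t by apply: mem_last_neq Lt _; rewrite eq_sym.
have Ns : s != [::] by case: s bs {Ps Ls Us Pe As Us1}.
have Nt : t != [::] by case: t ct {Pt Lt Ut Pe' At Ut1}.
case: (boolP (b \in a :: t)) => Hb.
- have bt : b \in t by move: Hb; rewrite inE => /orP [/eqP E|//]; by rewrite E eqxx in ab.
  case/splitPr: bt Pt Lt Ut Pe' At Ut1 ct Nt => p1 p2 Pt Lt Ut Pe' At Ut1 ct Nt.
  have Pr : path e a (rcons p1 b).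
  { move: Pe'; rewrite cat_path => /andP [H1 /= /andP [H2 _]]; by rewrite rcons_path H1 H2. }
  have Ur : uniq (r :: a :: rcons p1 b).
  { move: Ut1; rewrite -cats1 -[r :: a :: (p1 ++ b :: p2)]/((r :: a :: p1) ++ b :: p2).
    rewrite -[b :: p2]/([:: b] ++ p2) catA cat_uniq => /andP [H _]; exact: H. }
  apply: (@core r a (p1 ++ b :: p2) (rcons p1 b) Pe' Pr Ut1 Ur era _ _ Nt _ c ct).
  + by rewrite Lt esym.
  + by rewrite last_rcons esym.
  + by case: p1 {Pr Ur Pt Lt Ut Pe' At Ut1 ct Nt}.
  + apply/negP; rewrite inE => /orP [/eqP E|]; first by rewrite E eqxx in ac.
    rewrite -cats1 mem_cat => /orP [c1|]; last by rewrite inE => /eqP E; rewrite E eqxx in bc.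
    have c2 : c \in b :: p2 by rewrite -Lt last_cat /=; apply: mem_last.
    move: Ut; rewrite cons_uniq cat_uniq => /andP [_ /and3P [_ /hasPn H _]].
    by have := H c c2; rewrite c1.
- apply: (@core r a s t Pe Pe' Us1 Ut1 era _ _ Ns Nt b bs Hb).
  + by rewrite Ls esym.
  + by rewrite Lt esym.
Qed.


End GraphTh.


Section Main.
Variable V : finType.
Variable e : rel V.
Hypothesis esym : symmetric e.
Hypothesis eirr : irreflexive e.
Hypothesis Hcac : forall c1 c2 : seq V, is_graph_cycle e c1 -> is_graph_cycle e c2 ->
    cycle_edges c1 != cycle_edges c2 -> [disjoint cycle_edges c1 & cycle_edges c2].
Variable col : V -> bool.
Hypothesis Hcol : forall x y, e x y -> col x != col y.

Local Notation W := (V + V)%type.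
Local Notation good := (good e).
Local Notation NF1 := (NF1 e).
Local Notation NF2 := (NF2 e).
Local Notation eX := (eX e).
Local Notation connX := (connX e).

Definition C1 (X : {set V}) := forall r, r \in X -> connX X -> exists p, good X p /\ NF1 X r p.
Definition C2 (X : {set V}) := forall a b qi, a \in X -> b \in X -> a != b -> connX X ->
  qi != [::] -> path e b qi -> e (last b qi) a -> uniq qi -> all (fun v => v \notin X) qi ->
  exists p, good X p /\ NF2 (col a == col b) X a b p.

Lemma connect_mono (Y Z : {set V}) x y : Y \subset Z -> connect (eX Y) x y -> connect (eX Z) x y.
Proof.
move=> /subsetP S; apply: connect_sub => u v /and3P [Hu Hv Huv]; apply: connect1.
by rewrite /eX (S _ Hu) (S _ Hv) Huv.
Qed.

Lemma reach (X Z : {set V}) t z : connX X -> z \in X -> t \in X -> t \in Z -> Z \subset X ->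
  z \in Z ->
  (forall x y, x \in Z -> x != t -> y \in X -> e x y -> y != t -> y \in Z) ->
  connect (eX Z) z t.
Proof.
move=> cX zX tX tZ ZX zZ Pres.
case: (eqVneq z t) => [->|Nzt]; first exact: connect0.
have /connectP [p Hp Lp] := cX z t zX tX.
have Pz : (z \in Z) && (z != t) by rewrite zZ Nzt.
have nPt : ~~ ((t \in Z) && (t != t)) by rewrite eqxx andbF.
have Pr : forall u v, (u \in Z) && (u != t) -> eX X u v -> v != t -> (v \in Z) && (v != t).
{ move=> u v /andP [uZ ut] /and3P [_ vX euv] vt; rewrite vt andbT; exact: Pres uZ ut vX euv vt. }
have [x [/andP [xZ xt] /and3P [_ _ ext] Cx]] :=
  walk (P := fun x => (x \in Z) && (x != t)) Hp (sym_eq Lp) Pz nPt Pr.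
have Ext : eX Z x t by rewrite /eX xZ tZ ext.
apply: (connect_trans _ (connect1 Ext)).
apply: connect_sub Cx => u v /= /and3P [/andP [uZ _] /andP [vZ _] /and3P [_ _ euv]].
by apply: connect1; rewrite /eX uZ vZ euv.
Qed.

Lemma col_bool (a b c : V) : col a != col c -> (col a == col b) = ~~ (col c == col b).
Proof. by case: (col a); case: (col b); case: (col c). Qed.

Lemma main n : forall X : {set V}, #|X| <= n -> C1 X /\ C2 X.
Proof.
elim: n => [|n IH] X HX.
- have X0 : X = set0 by apply/eqP; rewrite -cards_eq0 -leqn0.
  by split; [move=> r|move=> a b qi]; rewrite X0 inE.
have small : forall Y : {set V}, Y \subset X -> forall x, x \in X -> x \notin Y -> C1 Y /\ C2 Y.
{ move=> Y YX x xX xY; apply: IH.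
  have : #|Y| < #|X| by apply: proper_card; apply/properP; split => //; exists x.
  move=> H; rewrite -ltnS; exact: leq_trans H HX. }
split.
- move=> r rX cX.
  set D := X :\ r.
  have rD : r \notin D by rewrite !inE eqxx.
  have DX : D \subset X by apply/subsetP => x; rewrite !inE => /andP [].
  have XD : X = r |: D by rewrite setD1K.
  case: (set_0Vmem D) => [D0|[z zD]].
  + have Xr : X = [set r].
    { apply/setP => x; rewrite inE; apply/idP/idP => [xX|/eqP ->//].
      apply/negPn/negP => xr; have : x \in D by rewrite !inE xr xX.
      by rewrite D0 inE. }
    set p := fun w : W => if w is inl _ then pt00 else pt10.
    have [G [_ N]] := single eirr (p := p) (r := r) erefl erefl.
    by exists p; rewrite Xr.
  +
    have zX : z \in X by move: zD; rewrite !inE => /andP [].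
    have /connectP [p0 Hp0 Lp0] := cX z r zX rX.
    have PrD : forall x y, x \in D -> eX X x y -> y != r -> y \in D.
    { move=> x y _ /and3P [_ yX _] yr; by rewrite !inE yr yX. }
    have [c [cD /and3P [_ _ ecr] _]] := walk (P := fun x => x \in D) Hp0 (sym_eq Lp0) zD rD PrD.
    have erc : e r c by rewrite esym.
    have CD : comp e D c \subset D := comp_sub e D c.
    have cC : c \in comp e D c by rewrite inE cD connect0.
    have Ccl : forall x y, x \in comp e D c -> y \in D -> e x y -> y \in comp e D c.
    { move=> x y; exact: comp_closed. }
    have Ccn : connX (comp e D c) by have H := comp_conn esym cD.
    move: (comp e D c) CD cC Ccl Ccn => C CD cC Ccl Ccn.
    case: (boolP (D \subset C)) => HDC.
    *
      have CeqD : C = D by apply/eqP; rewrite eqEsubset CD HDC.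
      have cD' : connX D by rewrite -CeqD.
      case: (boolP [exists b, [&& b \in D, b != c & e r b]]) => Hb.
      -- have /existsP [b /and3P [bD bc erb]] := Hb.
         have Nab : forall y, y \in D -> e r y -> y = c \/ y = b.
         { move=> y yD ery; case: (eqVneq y c) => [->|yc]; first by left.
           case: (eqVneq y b) => [->|yb]; first by right.
           exfalso; apply: (K1 esym Hcac rD cD' cD bD yD) => //.
           - by rewrite eq_sym.
           - by rewrite eq_sym.
           - by rewrite eq_sym. }
         have [_ C2D] := small D DX r rX rD.
         have cb : c != b by rewrite eq_sym.
         have q1 : path e b [:: r] by rewrite /= esym erb.
         have q2 : e (last b [:: r]) c by rewrite /= erc.
         have q3 : all (fun v => v \notin D) [:: r] by rewrite /= rD.
         have [p1 [G1 N1]] := C2D c b [:: r] cD bD cb cD' erefl q1 q2 erefl q3.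
         have Ecol : (col c == col b) = true.
         { have := Hcol erc; have := Hcol erb.
           by case: (col r); case: (col c); case: (col b). }
         rewrite Ecol in N1.
         have [p [G N]] := tmpl_close esym eirr rD cD bD Nab G1 N1.
         by exists p; rewrite XD.
      -- have Nc : forall y, y \in D -> e r y -> y = c.
         { move=> y yD ery; case: (eqVneq y c) => [//|yc]; exfalso.
           by move: Hb; rewrite negb_exists => /forallP /(_ y); rewrite yD yc ery. }
         have [C1D _] := small D DX r rX rD.
         have [p1 [G1 N1]] := C1D c cD cD'.
         have [p [G N]] := tmpl_bridge esym eirr rD cD Nc G1 N1.
         by exists p; rewrite XD.
    *
      have /subsetPn [z' z'D z'C] := HDC.
      set X1 := r |: C.
      set X2 := X :\: C.
      have CX : C \subset X := subset_trans CD DX.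
      have rC : r \notin C by apply/negP => /(subsetP CD); rewrite (negbTE rD).
      have X1X : X1 \subset X by rewrite subUset sub1set rX CX.
      have X2X : X2 \subset X by apply/subsetP => x; rewrite inE => /andP [].
      have z'X : z' \in X by apply: (subsetP DX).
      have z'X1 : z' \notin X1.
      { rewrite !inE negb_or z'C andbT; apply/eqP => E; by rewrite E (negbTE rD) in z'D. }
      have cXX : c \in X by apply: (subsetP DX).
      have cX2 : c \notin X2 by rewrite inE cC.
      have rX1 : r \in X1 by rewrite !inE eqxx.
      have rX2 : r \in X2 by rewrite inE rC rX.
      have [C1X1 _] := small X1 X1X z' z'X z'X1.
      have [C1X2 _] := small X2 X2X c cXX cX2.
      have closC : forall x y, x \in C -> y \in X -> y != r -> e x y -> y \in C.
      { move=> x y xC yX yr exy; apply: (Ccl x) => //; by rewrite !inE yr yX. }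
      have cX1 : connX X1.
      { have Hr : forall x, x \in X1 -> connect (eX X1) r x.
        { move=> x; rewrite !inE => /orP [/eqP ->|xC]; first exact: connect0.
          have cX1 : c \in X1 by rewrite !inE cC orbT.
          have Erc : eX X1 r c by rewrite /eX rX1 cX1 erc.
          apply: (connect_trans (connect1 Erc)).
          apply: (connect_mono (Y := C)); first by apply/subsetP => y yC; rewrite !inE yC orbT.
          by apply: Ccn. }
        move=> x y Hx Hy; apply: connect_trans (Hr y Hy); apply: (connX_sym esym); exact: Hr. }
      have cX2' : connX X2.
      { have Hr : forall x, x \in X2 -> connect (eX X2) x r.
        { move=> x xX2; apply: (reach cX) => //.
          - by move: xX2; rewrite inE => /andP [].
          - move=> u v uX2 ur vX euv vr; rewrite inE vX andbT; apply/negP => vC.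
            have uC : u \in C by apply: (closC v u vC) => //; [by move: uX2; rewrite inE => /andP []|by rewrite esym].
            by move: uX2; rewrite inE uC. }
        move=> x y Hx Hy; apply: connect_trans (Hr x Hx) _; apply: (connX_sym esym); exact: Hr. }
      have [p1 [G1 N1]] := C1X1 r rX1 cX1.
      have [p2 [G2 N2]] := C1X2 r rX2 cX2'.
      have I12 : forall x, x \in X1 -> x \in X2 -> x = r.
      { move=> x; rewrite !inE => /orP [/eqP ->//|xC] /andP [xC' _]; by rewrite xC in xC'. }
      have NE : forall x y, x \in X1 -> y \in X2 -> x <> r -> y <> r -> e x y = false.
      { move=> x y; rewrite !inE => /orP [/eqP //|xC] /andP [yC yX] xr yr.
        apply/negP => exy; have := closC x y xC yX (introN eqP yr) exy; by rewrite (negbTE yC). }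
      have [p [G N]] := glue_split esym eirr rX1 rX2 I12 NE G1 N1 G2 N2.
      have XU : X1 :|: X2 = X.
      { apply/setP => x; rewrite !inE; case: (eqVneq x r) => [->|xr] /=; first by rewrite rX.
        case: (boolP (x \in C)) => xC /=; last by [].
        by rewrite (subsetP CX x xC). }
      by exists p; rewrite -XU.
- move=> a b qi aX bX ab cX Nq Pq Lq Uq Aq.
  set D' := X :\ a.
  have bD' : b \in D' by rewrite !inE eq_sym ab bX.
  have RD : comp e D' b \subset D' := comp_sub e D' b.
  have bR : b \in comp e D' b by rewrite inE bD' connect0.
  have Rcl : forall x y, x \in comp e D' b -> y \in D' -> e x y -> y \in comp e D' b.
  { move=> x y; exact: comp_closed. }
  have cR : connX (comp e D' b) by have H := comp_conn esym bD'.
  have K2' : forall u w, u \in comp e D' b -> w \in comp e D' b -> u != w -> e a u -> e a w -> False.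
  { move=> u w uR wR uw eau eaw; exact: (K2 esym Hcac aX bX ab Nq Pq Lq Uq Aq uR wR uw eau eaw). }
  move: (comp e D' b) RD bR Rcl cR K2' => R RD bR Rcl cR K2'.
  have D'X : D' \subset X by apply/subsetP => x; rewrite !inE => /andP [].
  have RX : R \subset X := subset_trans RD D'X.
  have aR : a \notin R by apply/negP => /(subsetP RD); rewrite !inE eqxx.
  have /connectP [p0 Hp0 Lp0] := cX b a bX aX.
  have PrR : forall x y, x \in R -> eX X x y -> y != a -> y \in R.
  { move=> x y xR /and3P [_ yX exy] ya; apply: (Rcl x) => //; by rewrite !inE ya yX. }
  have [a2 [a2R /and3P [_ _ ea2a] _]] := walk (P := fun x => x \in R) Hp0 (sym_eq Lp0) bR aR PrR.
  have eaa2 : e a a2 by rewrite esym.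
  have uniqN : forall y, y \in R -> e a y -> y = a2.
  { move=> y yR eay; case: (eqVneq y a2) => [//|ya2]; exfalso.
    exact: (K2' y a2 yR a2R ya2 eay eaa2). }
  set H1 := X :\: R.
  have aH1 : a \in H1 by rewrite inE aR aX.
  have H1X : H1 \subset X by apply/subsetP => x; rewrite inE => /andP [].
  have Dj : forall x, x \in H1 -> x \in R -> False by move=> x; rewrite inE => /andP [/negP].
  have Ed : forall x y, x \in H1 -> y \in R -> e x y -> x = a /\ y = a2.
  { move=> x y xH yR exy; case: (eqVneq x a) => [Exa|xa].
    - by subst x; split => //; apply: uniqN.
    - exfalso; apply: (Dj x xH); apply: (Rcl y) => //; last by rewrite esym.
      by rewrite !inE xa; move: xH; rewrite inE => /andP []. }
  have cH1 : connX H1.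
  { have Ha : forall x, x \in H1 -> connect (eX H1) x a.
    { move=> x xH; apply: (reach cX) => //.
      - by move: xH; rewrite inE => /andP [].
      - move=> u v uH ua vX euv va; rewrite inE vX andbT; apply/negP => vR.
        apply: (Dj u uH); apply: (Rcl v) => //; last by rewrite esym.
        by rewrite !inE ua; move: uH; rewrite inE => /andP []. }
    move=> x y Hx Hy; apply: connect_trans (Ha x Hx) _; apply: (connX_sym esym); exact: Ha. }
  have XU : H1 :|: R = X.
  { apply/setP => x; rewrite !inE; case: (boolP (x \in R)) => xR /=; rewrite ?orbT ?orbF //.
    by rewrite (subsetP RX x xR). }
  have bH1 : b \notin H1 by rewrite inE bR.
  have [C1H _] := small H1 H1X b bX bH1.
  have [p1 [G1 N1]] := C1H a aH1 cH1.
  have [C1R C2R] := small R RX a aX aR.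
  case: (eqVneq a2 b) => [Eab|Nab].
  + subst a2.
    have [p2 [G2 N2]] := C1R b bR cR.
    have [p [G N]] := tmpl_baseD esym eirr Dj Ed aH1 bR G1 N1 G2 N2.
    have Ecol : (col a == col b) = false.
    { have := Hcol eaa2; by case: (col a); case: (col b). }
    by exists p; rewrite Ecol -XU.
  + have r1 : rcons qi a != [::] by case: (qi).
    have r2 : path e b (rcons qi a) by rewrite rcons_path Pq Lq.
    have r3 : e (last b (rcons qi a)) a2 by rewrite last_rcons.
    have r4 : uniq (rcons qi a).
    { rewrite rcons_uniq Uq andbT; apply/negP => aq; have := allP Aq a aq; by rewrite aX. }
    have r5 : all (fun v => v \notin R) (rcons qi a).
    { rewrite all_rcons aR /=; apply/allP => x xq; apply/negP => xR.
      have := allP Aq x xq; by rewrite (subsetP RX x xR). }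
    have [p2 [G2 N2]] := C2R a2 b (rcons qi a) a2R bR Nab cR r1 r2 r3 r4 r5.
    have Ecol := col_bool b (Hcol eaa2).
    case: (boolP (col a == col b)) => Hc.
    * have E2 : (col a2 == col b) = false.
      { have := Hcol eaa2; move: Hc; by case: (col a); case: (col a2); case: (col b). }
      rewrite E2 in N2.
      have [p [G N]] := tmpl_stepS esym eirr Dj Ed aH1 a2R bR G1 N1 G2 N2.
      by exists p; rewrite -XU.
    * have E2 : (col a2 == col b) = true.
      { have := Hcol eaa2; move: Hc; by case: (col a); case: (col a2); case: (col b). }
      rewrite E2 in N2.
      have [p [G N]] := tmpl_stepD esym eirr Dj Ed aH1 a2R bR G1 N1 G2 N2.
      by exists p; rewrite -XU.
Qed.

End Main.


Theorem lemma6p4 (V : finType) (e : rel V) :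
  simple_graph e -> cactus e -> bipartite e -> planar (great_shadow e).
Proof.
move=> [esym eirr] [conn Hcac] [col Hcol].
case: (pickP (fun _ : V => true)) => [r _|H].
- have [C1V _] := main esym eirr Hcac Hcol (leqnn #|[set: V]|).
  have cX : connX e [set: V].
  { move=> x y _ _.
    have E : eX e [set: V] =2 e by move=> u v; rewrite /eX !in_setT.
    rewrite (eq_connect E); exact: conn. }
  have [p [G _]] := C1V r (in_setT r) cX.
  exists p, (fun u v => seg (p u) (p v)); have := good_planar eirr G; exact.
- have F : forall w : V + V, False by case=> v; have := H v.
  exists (fun _ => pt00), (fun _ _ _ => pt00); split; [|split].
  + by move=> u; case: (F u).
  + by move=> u; case: (F u).
  + by move=> u; case: (F u).
Qed.
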